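(* Let $(F,G)$ be an $(N,n)$ dual pair for $\mathcal H$. Then: (i) if $(F,G)\in\mathcal F^{(1)}$ then $(F,G)\in\mathcal R^{(1)}$; (ii) $(F,G)\in\mathcal F^{(1)}$ if and only if $(F,G)\in\mathcal N^{(1)}$; (iii) if $(F,G)\in\mathcal N^{(1)}$ then $(F,G)\in\mathcal R^{(1)}$.
   Context: $\mathcal H$ is a complex Hilbert space of finite dimension $n$, inner product linear in the first argument, $N\ge n$. A finite sequence $F=\{f_i\}_{i=1}^N$ is a frame if there are $0<A\le B$ with $A\|f\|^2\le\sum_i|\langle f,f_i\rangle|^2\le B\|f\|^2$ for all $f$. $G=\{g_i\}_{i=1}^N$ is a dual of $F$ if $f=\sum_i\langle f,g_i\rangle f_i$ for all $f$; $(F,G)$ is then an $(N,n)$ dual pair. $E_{\Lambda,F,G}f=\sum_{i\in\Lambda}\langle f,f_i\rangle g_i$. For a measure $\mathcal M$ on operators, let $\mathcal M^{(1)}_{F,G}=\max_{1\le i\le N}\mathcal M(E_{\{i\},F,G})$ and call $(F,G)$ optimal for $\mathcal M$ if $\mathcal M^{(1)}_{F,G}$ equals the infimum of $\mathcal M^{(1)}_{F',G'}$ over all $(N,n)$ dual pairs $(F',G')$ for $\mathcal H$. $\mathcal F^{(1)}$, $\mathcal R^{(1)}$, $\mathcal N^{(1)}$ denote the sets of optimal pairs for, respectively, the Frobenius norm $\|T\|_{\mathcal F}=\sqrt{\operatorname{tr}(T^*T)}$, the spectral radius $\rho(T)$, and the numerical radius $\omega(T)=\sup\{|\langle Tf,f\rangle|:\|f\|=1\}$.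 *)

(* Defs.v *)
From mathcomp Require Import all_boot all_order all_algebra.
From mathcomp Require Import classical_sets reals.
From mathcomp.real_closed Require Export complex.

Set Implicit Arguments.
Unset Strict Implicit.
Unset Printing Implicit Defensive.

Import Order.TTheory GRing.Theory Num.Theory.
Local Open Scope ring_scope.
Local Open Scope classical_set_scope.

(* The Hilbert space H of dimension n is C^n = 'cV[R[i]]_n, R : realType.  *)

(* inner product, linear in the first argument *)
Definition ip (R : realType) (n : nat) (x y : 'cV[R[i]]_n) : R[i] :=
  \sum_(k < n) x k 0 * conjc (y k 0).

Definition sqnorm (R : realType) (n : nat) (x : 'cV[R[i]]_n) : R :=
  complex.Re (ip x x).

Definition cabs (R : realType) (z : R[i]) : R := ComplexField.Normc.normc z.

Definition adjmx (R : realType) (m p : nat) (A : 'M[R[i]]_(m, p)) : 'M[R[i]]_(p, m) :=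
  (map_mx conjc A)^T.

Definition is_frame (R : realType) (N n : nat) (F : 'I_N -> 'cV[R[i]]_n) : Prop :=
  exists A B : R, 0 < A /\ A <= B /\
    forall f : 'cV[R[i]]_n,
      A * sqnorm f <= \sum_(i < N) cabs (ip f (F i)) ^+ 2 <= B * sqnorm f.

Definition is_dual (R : realType) (N n : nat) (F G : 'I_N -> 'cV[R[i]]_n) : Prop :=
  forall f : 'cV[R[i]]_n, f = \sum_(i < N) ip f (G i) *: F i.

Definition dual_pair (R : realType) (N n : nat) (F G : 'I_N -> 'cV[R[i]]_n) : Prop :=
  is_frame F /\ is_frame G /\ is_dual F G.

(* E_{{i},F,G} f = <f, f_i> g_i, as a matrix acting on column vectors *)
Definition Eop (R : realType) (N n : nat) (F G : 'I_N -> 'cV[R[i]]_n) (i : 'I_N)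
  : 'M[R[i]]_n := G i *m adjmx (F i).

Definition frob (R : realType) (n : nat) (T : 'M[R[i]]_n) : R :=
  Num.sqrt (complex.Re (\tr (adjmx T *m T))).

Definition is_eigenvalue (R : realType) (n : nat) (T : 'M[R[i]]_n) (l : R[i]) : Prop :=
  exists2 v : 'cV[R[i]]_n, v != 0 & T *m v = l *: v.

Definition specrad (R : realType) (n : nat) (T : 'M[R[i]]_n) : R :=
  sup [set cabs l | l in [set l | is_eigenvalue T l]].

Definition numrad (R : realType) (n : nat) (T : 'M[R[i]]_n) : R :=
  sup [set cabs (ip (T *m f) f) | f in [set f : 'cV[R[i]]_n | sqnorm f = 1]].

(* M^{(1)}_{F,G} = max_i M(E_{{i},F,G})  (all measures here are >= 0) *)
Definition M1 (R : realType) (N n : nat) (M : 'M[R[i]]_n -> R)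
  (F G : 'I_N -> 'cV[R[i]]_n) : R :=
  \big[Num.max/0]_(i < N) M (Eop F G i).

Definition optimal (R : realType) (N n : nat) (M : 'M[R[i]]_n -> R)
  (F G : 'I_N -> 'cV[R[i]]_n) : Prop :=
  dual_pair F G /\
  M1 M F G = inf [set r : R | exists (F' G' : 'I_N -> 'cV[R[i]]_n),
                                  dual_pair F' G' /\ r = M1 M F' G'].

(* Main.v *)
Require Import Defs.
From mathcomp Require Import all_boot all_order all_algebra all_solvable all_field.
From mathcomp Require Import classical_sets reals.
From mathcomp.real_closed Require Import complex.
From mathcomp Require Import ring lra.
Set Implicit Arguments. Unset Strict Implicit. Unset Printing Implicit Defensive.
Import Order.TTheory GRing.Theory Num.Theory.
Local Open Scope ring_scope.
Local Open Scope complex_scope.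

Section IP.
Variables (R : realType) (n : nat).
Implicit Types (x y z : 'cV[R[i]]_n) (a b : R[i]).

Lemma ipDl a x y z : ip (a *: x + y) z = a * ip x z + ip y z.
Proof.
rewrite /ip mulr_sumr -big_split; apply: eq_bigr => k _; by rewrite !mxE /= mulrDl mulrA.
Qed.

Lemma ipC x y : ip y x = conjc (ip x y).
Proof.
rewrite /ip rmorph_sum; apply: eq_bigr => k _; by rewrite rmorphM /= conjcK mulrC.
Qed.

Lemma ipDr a x y z : ip z (a *: x + y) = conjc a * ip z x + ip z y.
Proof. by rewrite ipC ipDl rmorphD rmorphM /= -!ipC. Qed.

Lemma ipZl a x z : ip (a *: x) z = a * ip x z.
Proof. by rewrite /ip mulr_sumr; apply: eq_bigr => k _; rewrite !mxE mulrA. Qed.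

Lemma ipZr a x z : ip z (a *: x) = conjc a * ip z x.
Proof. by rewrite ipC ipZl rmorphM /= -ipC. Qed.

Lemma ipBl x y z : ip (x - y) z = ip x z - ip y z.
Proof. by rewrite -scaleN1r addrC ipDl addrC mulN1r. Qed.

Lemma ip_ge0 x : 0 <= ip x x.
Proof. by apply: sumr_ge0 => k _; apply: mulcJ_ge0. Qed.

Lemma ip_real x : (sqnorm x)%:C = ip x x.
Proof. by rewrite /sqnorm RRe_real // ger0_real // ip_ge0. Qed.

Lemma sqnorm_ge0 x : 0 <= sqnorm x.
Proof. by rewrite -ler0c ip_real ip_ge0. Qed.

Lemma sqnorm_eq0 x : sqnorm x = 0 -> x = 0.
Proof.
move=> h; have : ip x x = 0 by rewrite -ip_real h.
move/eqP; rewrite psumr_eq0 => [/allP H|k _]; last exact: mulcJ_ge0.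
apply/matrixP => k j; rewrite (ord1 j) !mxE.
have := H k (mem_index_enum _); rewrite mulf_eq0 conjc_eq0 => /orP[]/eqP //.
Qed.

Lemma cabsE a : (cabs a)%:C = `|a|.
Proof. by rewrite normc_def; case: a. Qed.

Lemma cabs2 a : ((cabs a) ^+ 2)%:C = a * conjc a.
Proof. by rewrite rmorphXn /= cabsE sqr_normc. Qed.

Lemma cabs_ge0 a : 0 <= cabs a.
Proof. by rewrite -ler0c cabsE. Qed.

Lemma cabsJ a : cabs (conjc a) = cabs a.
Proof. by apply: complexI; rewrite !cabsE normcJ. Qed.

Lemma cabsM a b : cabs (a * b) = cabs a * cabs b.
Proof. by apply: complexI; rewrite rmorphM /= !cabsE normrM. Qed.

Lemma CS x y : cabs (ip x y) ^+ 2 <= sqnorm x * sqnorm y.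
Proof.
have [x0|xn0] := eqVneq (sqnorm x) 0.
  rewrite x0 mul0r (sqnorm_eq0 x0) /ip big1 ?expr0n /=; last by move=> k _; rewrite mxE mul0r.
  by rewrite expr0n addr0 sqrtr0 expr0n.
have xpos : 0 < sqnorm x by rewrite lt_def xn0 sqnorm_ge0.
set a := ip x x; set b := ip y x.
pose w := a *: y - b *: x.
have := ip_ge0 w.
rewrite /w ipBl !ipZl -!scaleNr !ipDr !ipZr.
have ha : conjc a = a by rewrite /a -ip_real conjc_real.
rewrite ha -/a -/b (ipC y x) -/b.
have E : forall u v : R[i], u *: v = u * v by [].
rewrite E rmorphN /=.
have -> : a * (a * ip y y + - conjc b * b) + - b * (a * conjc b + - conjc b * a)
   = a * (a * ip y y - b * conjc b) by ring.
rewrite /a -!ip_real -cabs2 -rmorphM -rmorphB -rmorphM /= ler0c.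
rewrite pmulr_rge0 // subr_ge0 => h.
by rewrite cabsJ.
Qed.

End IP.
Section Rank1.
Variables (R : realType) (n : nat).
Implicit Types (x y z g f v : 'cV[R[i]]_n) (a b : R[i]).

Lemma adj_mul_ip x y : adjmx y *m x = (ip x y)%:M.
Proof.
apply/matrixP => i j; rewrite (ord1 i) (ord1 j) !mxE /ip /=.
by apply: eq_bigr => k _; rewrite !mxE mulrC.
Qed.

Lemma E_apply g f v : (g *m adjmx f) *m v = ip v f *: g.
Proof. by rewrite -mulmxA adj_mul_ip mul_mx_scalar. Qed.

Lemma adjmx_mul m p q (A : 'M[R[i]]_(m, p)) (B : 'M[R[i]]_(p, q)) :
  adjmx (A *m B) = adjmx B *m adjmx A.
Proof. by rewrite /adjmx (map_mxM conjc) trmx_mul. Qed.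

Lemma adjmxK m p (A : 'M[R[i]]_(m, p)) : adjmx (adjmx A) = A.
Proof. by apply/matrixP => i j; rewrite !mxE conjcK. Qed.

Lemma frobE g f : frob (g *m adjmx f) = Num.sqrt (sqnorm g * sqnorm f).
Proof.
rewrite /frob adjmx_mul adjmxK mulmxA -(mulmxA f) adj_mul_ip mul_mx_scalar.
rewrite -scalemxAl mxtraceZ mxtrace_mulC adj_mul_ip mxtrace_scalar.
by rewrite -!ip_real -rmorphM.
Qed.
End Rank1.
Section Sup.
Variable R : realType.
Lemma sup_max (S : set R) m : S m -> (forall x, S x -> x <= m) -> sup S = m.
Proof.
move=> Sm ub; apply/le_anti/andP; split.
  by apply: ge_sup; [exists m | move=> x /ub].
by apply: sup_upper_bound => //; split; [exists m | exists m => x /ub].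
Qed.
Lemma sup_ge (S : set R) m x : S x -> (forall y, S y -> y <= m) -> x <= sup S.
Proof. by move=> Sx ub; apply: sup_upper_bound => //; split; [exists x | exists m => y /ub]. Qed.
Lemma sup_le (S : set R) m x : S x -> (forall y, S y -> y <= m) -> sup S <= m.
Proof. by move=> Sx ub; apply: ge_sup; [exists x | move=> y /ub]. Qed.
Lemma inf_min (S : set R) m : S m -> (forall x, S x -> m <= x) -> inf S = m.
Proof.
move=> Sm lb; apply/le_anti/andP; split.
  by apply: ge_inf => //; exists m => x /lb.
by apply: lb_le_inf; [exists m | move=> x /lb].
Qed.
End Sup.

Section Spec.
Variables (R : realType) (n : nat).
Implicit Types (x y z g f v : 'cV[R[i]]_n) (a b : R[i]).

Lemma ip0l y : ip (0 : 'cV[R[i]]_n) y = 0.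
Proof. by rewrite /ip big1 // => k _; rewrite mxE mul0r. Qed.

Lemma cabs0 : cabs (0 : R[i]) = 0.
Proof. by apply: complexI; rewrite cabsE normr0. Qed.

Lemma specE g f : (0 < n)%N -> specrad (g *m adjmx f) = cabs (ip g f).
Proof.
move=> n0; apply: sup_max.
  have [->|gn0] := eqVneq g 0.
    exists 0; last by rewrite ip0l.
    exists (const_mx 1).
      apply/eqP => /matrixP /(_ (Ordinal n0) 0); rewrite !mxE => /eqP; exact/negP/oner_neq0.
    by rewrite E_apply scaler0 scale0r.
  by exists (ip g f) => //; exists g => //; rewrite E_apply.
move=> x [l [v vn0 Ev] <-].
have [->|ln0] := eqVneq l 0; first by rewrite cabs0 cabs_ge0.
rewrite E_apply in Ev.
have EEv : ip v f * ip g f *: g = l * ip v f *: g.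
  have := congr1 (fun w => (g *m adjmx f) *m w) Ev.
  by rewrite /= -scalemxAr !E_apply ipZl scalerA.
have gv : ip v f *: g != 0 by rewrite Ev scaler_eq0 negb_or ln0.
move: gv; rewrite scaler_eq0 negb_or => /andP[a0 g0].
move/eqP: EEv; rewrite -subr_eq0 -scalerBl scaler_eq0 (negbTE g0) orbF.
rewrite [l * _]mulrC -mulrBr mulf_eq0 (negbTE a0) /= subr_eq0 => /eqP ->.
by [].
Qed.
End Spec.
Section Num.
Variables (R : realType) (n : nat).
Implicit Types (x y z g f v u : 'cV[R[i]]_n) (a b : R[i]).

Lemma cabsR (r : R) : cabs r%:C = `|r|.
Proof. by rewrite /cabs /= expr0n addr0 sqrtr_sqr. Qed.

Lemma normalize (T : 'M[R[i]]_n) v : 0 < sqnorm v ->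
  exists u, sqnorm u = 1 /\ cabs (ip (T *m u) u) = cabs (ip (T *m v) v) / sqnorm v.
Proof.
move=> vpos; set s := (Num.sqrt (sqnorm v))^-1.
have s2 : s ^+ 2 = (sqnorm v)^-1 by rewrite /s exprVn sqr_sqrtr // ltW.
exists (s%:C *: v); split.
  apply: complexI; rewrite ip_real ipZl ipZr conjc_real -ip_real -!rmorphM /=.
  by rewrite mulrA -expr2 s2 mulVf // gt_eqF.
rewrite -scalemxAr ipZl ipZr conjc_real mulrA -rmorphM /= cabsM cabsR -expr2 s2.
by rewrite ger0_norm ?invr_ge0 ?ltW // mulrC.
Qed.

Lemma elem_bound g f u : sqnorm u = 1 ->
  cabs (ip ((g *m adjmx f) *m u) u) <= Num.sqrt (sqnorm g * sqnorm f).
Proof.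
move=> u1; rewrite E_apply ipZl cabsM.
have h1 := CS u f; have h2 := CS g u; rewrite u1 mul1r in h1; rewrite u1 mulr1 in h2.
rewrite -(ger0_norm (mulr_ge0 (cabs_ge0 _) (cabs_ge0 _))) -sqrtr_sqr ler_sqrt; last first.
  by rewrite mulr_ge0 // sqnorm_ge0.
by rewrite exprMn mulrC ler_pM // exprn_ge0 // cabs_ge0.
Qed.

Lemma unit_exists : (0 < n)%N -> exists u : 'cV[R[i]]_n, sqnorm u = 1.
Proof.
move=> n0; have : 0 < sqnorm (const_mx 1 : 'cV[R[i]]_n).
  rewrite lt_def sqnorm_ge0 andbT; apply/eqP => /sqnorm_eq0 /matrixP /(_ (Ordinal n0) 0).
  by rewrite !mxE => /eqP; apply/negP/oner_neq0.
by move=> /(normalize 0) [u [u1 _]]; exists u.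
Qed.

Lemma num_le g f : (0 < n)%N -> numrad (g *m adjmx f) <= Num.sqrt (sqnorm g * sqnorm f).
Proof.
move=> n0; have [u u1] := unit_exists n0.
apply: (@sup_le _ _ _ (cabs (ip ((g *m adjmx f) *m u) u))); first by exists u.
by move=> y [w w1 <-]; apply: elem_bound.
Qed.

Lemma num_ge g f v : 0 < sqnorm v ->
  cabs (ip ((g *m adjmx f) *m v) v) / sqnorm v <= numrad (g *m adjmx f).
Proof.
move=> vpos; have [u [u1 <-]] := normalize (g *m adjmx f) vpos.
apply: (@sup_ge _ _ (Num.sqrt (sqnorm g * sqnorm f))); first by exists u.
by move=> y [w w1 <-]; apply: elem_bound.
Qed.

Lemma num_ge_tr g f : (0 < n)%N -> cabs (ip g f) <= numrad (g *m adjmx f).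
Proof.
move=> n0; have [g0|gn0] := eqVneq (sqnorm g) 0.
  rewrite (sqnorm_eq0 g0) ip0l cabs0.
  have [u u1] := unit_exists n0.
  apply: le_trans (@num_ge 0 f u _); last by rewrite u1 ltr01.
  by rewrite divr_ge0 ?cabs_ge0 ?sqnorm_ge0.
have gpos : 0 < sqnorm g by rewrite lt_def gn0 sqnorm_ge0.
apply: le_trans (@num_ge g f g gpos); rewrite E_apply ipZl cabsM -ip_real cabsR.
by rewrite ger0_norm ?sqnorm_ge0 // mulfK.
Qed.
End Num.
Section Num2.
Variables (R : realType) (n : nat).
Implicit Types (x y z g f v u : 'cV[R[i]]_n).

Lemma num_ge2 g f (c : R) : ip g f = c%:C -> 0 < c ->
  (Num.sqrt (sqnorm g * sqnorm f) + c) / 2 <= numrad (g *m adjmx f).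
Proof.
move=> gfc cpos.
have pq : forall x y, ip x y != 0 -> 0 < sqnorm x.
  move=> x y; rewrite lt_def sqnorm_ge0 andbT; apply: contra => /eqP/sqnorm_eq0 ->.
  by rewrite ip0l.
have gfn0 : ip g f != 0 by rewrite gfc; apply/eqP => /complexI /eqP; rewrite gt_eqF.
have ppos := pq _ _ gfn0.
have qpos : 0 < sqnorm f by apply: (pq _ g); rewrite ipC conjc_eq0.
set p := sqnorm g in ppos *; set q := sqnorm f in qpos *.
set a := Num.sqrt q; set b := Num.sqrt p.
have a2 : q = a ^+ 2 by rewrite sqr_sqrtr // ltW.
have b2 : p = b ^+ 2 by rewrite sqr_sqrtr // ltW.
have apos : 0 < a by rewrite sqrtr_gt0.
have bpos : 0 < b by rewrite sqrtr_gt0.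
have P : Num.sqrt (p * q) = a * b by rewrite sqrtrM ?ltW // mulrC.
pose v := a%:C *: g + b%:C *: f.
have gg : ip g g = (b ^+ 2)%:C by rewrite -ip_real -b2.
have ff : ip f f = (a ^+ 2)%:C by rewrite -ip_real -a2.
have fg : ip f g = c%:C by rewrite ipC gfc conjc_real.
have e1 : ip ((g *m adjmx f) *m v) v = (a * b * (a * b + c) ^+ 2)%:C.
  rewrite E_apply ipZl /v ipDl !ipZl ipDr !ipZr ?gg ?ff ?gfc ?fg !conjc_real.
  rewrite !rmorphM ?rmorphXn /= ?rmorphD ?rmorphM /= ?rmorphXn /=; ring.
have e2 : (sqnorm v)%:C = (2 * (a * b) * (a * b + c))%:C.
  rewrite ip_real /v ipDl !ipZl !ipDr !ipZr ?gg ?ff ?gfc ?fg !conjc_real.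
  rewrite !rmorphM ?rmorphXn /= ?rmorphD ?rmorphM /= ?rmorphXn ?rmorph_nat /=. rewrite (_ : (1 : R)%:C = 1) //. ring.
have ab := mulr_gt0 apos bpos.
have vpos : 0 < sqnorm v.
  rewrite (complexI e2); apply: mulr_gt0; first exact: mulr_gt0.
  exact: addr_gt0.
apply: (le_trans _ (@num_ge _ _ g f v vpos)); rewrite e1 cabsR (complexI e2) P.
rewrite ger0_norm; last by apply: mulr_ge0; [exact: ltW|exact: exprn_ge0 (ltW (addr_gt0 ab cpos))].
rewrite le_eqVlt; apply/orP; left; apply/eqP; field.
by rewrite !gt_eqF // addr_gt0.
Qed.
End Num2.
Section Trace.
Variables (R : realType) (n N : nat).
Implicit Types (F G : 'I_N -> 'cV[R[i]]_n).

Lemma ip_delta k (y : 'cV[R[i]]_n) : ip (delta_mx k 0) y = conjc (y k 0).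
Proof.
rewrite /ip (bigD1 k) //= big1 ?addr0; first by rewrite mxE !eqxx mul1r.
by move=> l lk; rewrite mxE (negbTE lk) mul0r.
Qed.

Lemma trace_sum F G : is_dual F G -> \sum_i ip (F i) (G i) = n%:R.
Proof.
move=> dual.
have e1 : forall k : 'I_n, \sum_i F i k 0 * conjc (G i k 0) = 1.
  move=> k; have := congr1 (fun M : 'cV[R[i]]_n => M k 0) (dual (delta_mx k 0)).
  rewrite /= mxE !eqxx /= summxE => h; apply: (etrans _ (esym h)); apply: eq_bigr => i _.
  by rewrite mxE ip_delta mulrC.
rewrite /ip exchange_big /= (eq_bigr (fun _ => 1)) ?sumr_const ?card_ord //.
Qed.

Lemma ReD (x y : R[i]) : complex.Re (x + y) = complex.Re x + complex.Re y.
Proof. by case: x; case: y. Qed.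

Lemma Re_sum (t : 'I_N -> R[i]) : complex.Re (\sum_i t i) = \sum_i complex.Re (t i).
Proof. exact: (big_morph (@complex.Re R) ReD). Qed.

Lemma Re_le (x : R[i]) : complex.Re x <= cabs x.
Proof.
apply: le_trans (ler_norm _) _; rewrite -lecR cabsE; exact: normc_ge_Re.
Qed.

Lemma Re_nat (m : nat) : complex.Re (m%:R : R[i]) = m%:R.
Proof.
elim: m => [|m IH]; first by rewrite mulr0n.
by rewrite mulrS ReD IH mulrS addrC.
Qed.

Lemma sumRe F G : is_dual F G -> \sum_i complex.Re (ip (F i) (G i)) = n%:R.
Proof. by move=> d; rewrite -Re_sum trace_sum // Re_nat. Qed.

Lemma exists_big (t : 'I_N -> R[i]) : (0 < N)%N -> \sum_i complex.Re (t i) = n%:R ->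
  exists i, n%:R / N%:R <= cabs (t i).
Proof.
move=> N0 hs; case: (pickP (fun i => n%:R / N%:R <= complex.Re (t i))) => [i hi|H].
  by exists i; apply: le_trans hi (Re_le _).
exfalso; have : \sum_(i < N) complex.Re (t i) < \sum_(i < N) (n%:R / N%:R : R).
  apply: ltr_sum; first by apply/hasP; exists (Ordinal N0); rewrite ?mem_index_enum.
  by move=> i _; rewrite ltNge H.
rewrite hs sumr_const card_ord -[_ *+ N]mulr_natr divfK ?ltxx //.
by rewrite pnatr_eq0 -lt0n.
Qed.

Lemma eq_case (t : 'I_N -> R[i]) : (0 < N)%N -> \sum_i complex.Re (t i) = n%:R ->
  (forall i, cabs (t i) <= n%:R / N%:R) -> forall i, t i = (n%:R / N%:R)%:C.
Proof.
move=> N0 hs hle.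
set c : R := n%:R / N%:R.
have sc : \sum_(i < N) (c - complex.Re (t i)) = 0.
  rewrite sumrB hs sumr_const card_ord -[_ *+ N]mulr_natr divfK ?subrr //.
  by rewrite pnatr_eq0 -lt0n.
move=> i; have := psumr_eq0P _ sc (i := i) isT.
have ge : forall j, 0 <= c - complex.Re (t j).
  by move=> j; rewrite subr_ge0; apply: le_trans (Re_le _) (hle j).
move=> /(_ (fun j _ => ge j)) /eqP; rewrite subr_eq0 => /eqP cRe.
have := hle i; case E : (t i) => [a b]; rewrite E /= in cRe.
rewrite /cabs /= -cRe => hab.
have c0 : 0 <= c by rewrite divr_ge0 ?ler0n.
rewrite -/c in hab.
have : c ^+ 2 + b ^+ 2 <= c ^+ 2.
  by rewrite -ler_sqrt ?sqr_ge0 // sqrtr_sqr ger0_norm.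
rewrite gerDl => b2; have : b ^+ 2 == 0 by rewrite eq_le b2 sqr_ge0.
by rewrite sqrf_eq0 => /eqP ->.
Qed.
End Trace.
Lemma prim_exists (R : realType) (N : nat) : (N > 0)%N -> exists z : R[i], N.-primitive_root z.
Proof.
pose p : {poly R[i]} := 'X^N - 1; have [r Dp] := closed_field_poly_normal p.
move=> n_gt0; rewrite (monicP _) ?monicXnsubC // scale1r in Dp.
have rn1: all N.-unity_root r by apply/allP=> z; rewrite -root_prod_XsubC -Dp.
have sz_r: (N < (size r).+1)%N.
  by rewrite -(size_prod_XsubC r id) -Dp size_XnsubC.
have [|z] := hasP (has_prim_root n_gt0 rn1 _ sz_r); last by exists z.
by rewrite -separable_prod_XsubC -Dp separable_Xn_sub_1 // pnatr_eq0 -lt0n.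
Qed.

Section Parseval.
Variables (R : realType) (n N : nat).

Lemma ipD (x y z : 'cV[R[i]]_n) : ip (x + y) z = ip x z + ip y z.
Proof. by have := ipDl 1 x y z; rewrite scale1r mul1r. Qed.

Lemma ip_suml (x : 'I_N -> 'cV[R[i]]_n) z : ip (\sum_j x j) z = \sum_j ip (x j) z.
Proof. exact: (big_morph (fun w => ip w z) (fun a b => ipD a b z) (ip0l z)). Qed.

Lemma parseval (h : 'I_N -> 'cV[R[i]]_n) f : is_dual h h ->
  sqnorm f = \sum_j cabs (ip f (h j)) ^+ 2.
Proof.
move=> d; apply: complexI; rewrite ip_real {1}(d f) ip_suml rmorph_sum.
apply: eq_bigr => j _; rewrite ipZl (ipC f (h j)); exact: (esym (cabs2 _)).
Qed.

Lemma parseval_frame (h : 'I_N -> 'cV[R[i]]_n) : is_dual h h -> is_frame h.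
Proof.
move=> d; exists 1, 1; split; first exact: ltr01; split => // f.
by rewrite mul1r -parseval // lexx.
Qed.
End Parseval.

Lemma conjM (R : realType) (x y : R[i]) : conjc (x * y) = conjc x * conjc y.
Proof. exact: rmorphM. Qed.
Lemma conjX (R : realType) (x : R[i]) m : conjc (x ^+ m) = conjc x ^+ m.
Proof. exact: rmorphXn. Qed.

Lemma natC (R : realType) (m : nat) : ((m%:R : R)%:C) = m%:R :> R[i].
Proof. exact: rmorph_nat. Qed.
Lemma realM (R : realType) (x y : R) : (x * y)%:C = x%:C * y%:C :> R[i].
Proof. exact: rmorphM. Qed.

Lemma oneC (R : realType) : ((1 : R)%:C) = 1 :> R[i].
Proof. exact: rmorph1. Qed.

Lemma realMn (R : realType) (x : R) m : (x *+ m)%:C = x%:C *+ m :> R[i].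
Proof. exact: rmorphMn. Qed.

Section Harmonic.
Variables (R : realType) (n N : nat) (w : R[i]).
Hypothesis N0 : (0 < N)%N.
Hypothesis nN : (n <= N)%N.
Hypothesis wprim : N.-primitive_root w.

Lemma w_conj : w * conjc w = 1.
Proof.
have h1 : `|w| ^+ N = 1 by rewrite -normrX prim_expr_order // normr1.
have : `|w| == 1 by rewrite -(pexpr_eq1 N0) ?normr_ge0 // h1.
move=> /eqP w1; rewrite -[w * _]sqr_normc w1; exact: expr1n.
Qed.

Lemma w_pow_conj a b : (b <= a)%N -> w ^+ a * conjc w ^+ b = w ^+ (a - b).
Proof.
move=> ba; rewrite -{1}(subnK ba) exprD -mulrA -exprMn w_conj expr1n mulr1; reflexivity.
Qed.

Lemma w_neq1 a b : (a < N)%N -> (b < N)%N -> a != b -> w ^+ a * conjc w ^+ b != 1.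
Proof.
have key : forall a b, (a < N)%N -> (b < a)%N -> w ^+ a * conjc w ^+ b != 1.
  move=> x y xN yx; rewrite (w_pow_conj (ltnW yx)).

  rewrite -(expr0 w).

  rewrite (eq_prim_root_expr wprim) mod0n modn_small.
    rewrite subn_eq0 -ltnNge; exact: yx.
  exact: leq_ltn_trans (leq_subr _ _) xN.
move=> aN bN; rewrite neq_ltn => /orP [ab|ba]; last exact: key.
apply: contra (key b a bN ab) => /eqP h; apply/eqP.
rewrite (_ : w ^+ b * conjc w ^+ a = conjc (w ^+ a * conjc w ^+ b)).
  rewrite h; exact: conjc1.
rewrite rmorphM !rmorphXn /= conjcK mulrC; reflexivity.
Qed.

Definition sN : R := (Num.sqrt N%:R)^-1.
Lemma sN2 : sN ^+ 2 = N%:R^-1.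
Proof. by rewrite /sN exprVn sqr_sqrtr ?ler0n. Qed.

Definition harm (j : 'I_N) : 'cV[R[i]]_n := \col_(k < n) (sN%:C * w ^+ (j * k)).

Lemma geo (a b : nat) : (a < N)%N -> (b < N)%N ->
  \sum_(j < N) (w ^+ a * conjc w ^+ b) ^+ j = if a == b then N%:R else 0.
Proof.
move=> aN bN; case: eqP => [->|/eqP ab].
  rewrite -exprMn w_conj expr1n (eq_bigr (fun _ => 1)) ?sumr_const ?card_ord //.
  by move=> j _; rewrite expr1n.
have zN : (w ^+ a * conjc w ^+ b) ^+ N = 1.
  rewrite exprMn -!exprM mulnC exprM (prim_expr_order wprim) expr1n mul1r.
  rewrite -rmorphXn mulnC exprM (prim_expr_order wprim) expr1n; exact: conjc1.
have := subrX1 (w ^+ a * conjc w ^+ b) N; rewrite zN subrr => /esym/eqP.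
rewrite mulf_eq0 subr_eq0 (negbTE (w_neq1 aN bN ab)) /= => /eqP h; exact: h.
Qed.


Lemma harm_dual : is_dual harm harm.
Proof.
move=> f; apply/matrixP => k z; rewrite (ord1 z) summxE.
have e : forall j : 'I_N, (ip f (harm j) *: harm j) k 0 =
    \sum_(l < n) f l 0 * (sN ^+ 2)%:C * (w ^+ k * conjc w ^+ l) ^+ j.
  move=> j; rewrite mxE /ip mulr_suml; apply: eq_bigr => l _; rewrite !mxE.
  have cs : conjc (sN%:C) = sN%:C := conjc_real sN.
  have s2 : (sN ^+ 2)%:C = sN%:C * sN%:C by rewrite rmorphXn expr2.
  rewrite conjM cs conjX s2 exprMn -!exprM ![(_ * j)%N]mulnC.
  ring.
rewrite (eq_bigr _ (fun j _ => e j)) exchange_big /=.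
rewrite (eq_bigr (fun l : 'I_n => f l 0 * (sN ^+ 2)%:C * (if k == l :> nat then N%:R else 0))); last first.
  move=> l _; rewrite -mulr_sumr geo //; last exact: leq_trans (ltn_ord l) nN.
  exact: leq_trans (ltn_ord k) nN.
rewrite (bigD1 k) //= big1 ?addr0; last first.
  move=> l lk; rewrite (_ : (k == l :> nat) = false) ?mulr0 //.
  by apply/negbTE; rewrite eq_sym.
rewrite eqxx -mulrA -natC -realM sN2 mulVf ?pnatr_eq0 -?lt0n //.
rewrite oneC mulr1; reflexivity.
Qed.


Lemma harm_norm j : sqnorm (harm j) = n%:R / N%:R.
Proof.
apply: complexI; rewrite ip_real /ip (eq_bigr (fun _ => (N%:R^-1 : R)%:C)).
  rewrite sumr_const card_ord -realMn -[_ *+ n]mulr_natl; reflexivity.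
move=> k _; rewrite !mxE conjM conjc_real conjX.
rewrite mulrACA -realM -expr2 sN2 -exprMn w_conj expr1n mulr1; reflexivity.
Qed.

Lemma harm_pair : dual_pair harm harm.
Proof. by split; [|split]; [apply: parseval_frame; apply: harm_dual..|apply: harm_dual]. Qed.

Lemma harm_frob j : frob (Eop harm harm j) = n%:R / N%:R.
Proof.
rewrite /Eop frobE harm_norm -expr2 sqrtr_sqr ger0_norm //.
by rewrite divr_ge0 ?ler0n.
Qed.
End Harmonic.

Section Main.
Variables (R : realType) (n N : nat).
Implicit Types (F G : 'I_N -> 'cV[R[i]]_n) (M : 'M[R[i]]_n -> R) (g f : 'cV[R[i]]_n).

Lemma M1_ge M F G i x : x <= M (Eop F G i) -> x <= M1 M F G.
Proof. by move=> h; rewrite /M1 (bigD1 i) //= le_max h. Qed.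

Lemma M1_le M F G x : 0 <= x -> (forall i, M (Eop F G i) <= x) -> M1 M F G <= x.
Proof.
move=> x0 h; rewrite /M1; apply: (big_ind (fun y => y <= x)) => //.
  by move=> a b ha hb; rewrite ge_max ha hb.
Qed.

Definition Sset M : set R := fun r => exists (F' G' : 'I_N -> 'cV[R[i]]_n),
                                  dual_pair F' G' /\ r = M1 M F' G'.

Hypothesis n0 : (0 < n)%N.
Hypothesis nN : (n <= N)%N.
Let N0 : (0 < N)%N := leq_trans n0 nN.
Let c : R := n%:R / N%:R.
Let c_gt0 : 0 < c.
Proof. by rewrite divr_gt0 // ltr0n. Qed.

Lemma LB M F G : (forall g f, cabs (ip g f) <= M (g *m adjmx f)) -> dual_pair F G ->
  c <= M1 M F G.
Proof.
move=> hM [_ [_ d]].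
have [i hi] := exists_big N0 (sumRe d).
apply: (@M1_ge _ _ _ i); apply: le_trans hi _.
by rewrite ipC cabsJ; apply: hM.
Qed.

Lemma frob_tr g f : cabs (ip g f) <= frob (g *m adjmx f).
Proof.
rewrite frobE -(ger0_norm (cabs_ge0 (ip g f))) -sqrtr_sqr ler_sqrt ?CS //.
by rewrite mulr_ge0 ?sqnorm_ge0.
Qed.

Lemma spec_tr g f : cabs (ip g f) <= specrad (g *m adjmx f).
Proof. by rewrite specE. Qed.

Lemma num_tr g f : cabs (ip g f) <= numrad (g *m adjmx f).
Proof. exact: num_ge_tr. Qed.

Lemma inf_c M F0 G0 : (forall g f, cabs (ip g f) <= M (g *m adjmx f)) ->
  dual_pair F0 G0 -> M1 M F0 G0 <= c -> inf (Sset M) = c.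
Proof.
move=> hM d0 le0; apply: inf_min.
  exists F0, G0; split => //; apply/le_anti; rewrite le0 andbT; exact: LB hM d0.
by move=> x [F' [G' [d' ->]]]; apply: LB.
Qed.

Lemma harm_exists : exists F0 G0, dual_pair F0 G0 /\ M1 (@frob R n) F0 G0 <= c.
Proof.
have [w wp] := prim_exists R N0.
exists (@harm R n N w), (@harm R n N w); split; first exact: (harm_pair N0 nN wp).
apply: M1_le; first exact: ltW.
by move=> j; rewrite (harm_frob n N0 wp).
Qed.

Lemma inf_frob : inf (Sset (@frob R n)) = c.
Proof. have [F0 [G0 [d l]]] := harm_exists; exact: inf_c frob_tr d l. Qed.

Lemma inf_num : inf (Sset (@numrad R n)) = c.
Proof.
have [F0 [G0 [d l]]] := harm_exists; apply: inf_c num_tr d _.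
apply: M1_le; first exact: ltW.
move=> i; apply: le_trans (num_le _ _ n0) _; rewrite -frobE.
exact: le_trans (M1_ge (lexx _)) l.
Qed.

Lemma frob_opt_le F G : optimal (@frob R n) F G -> forall i, frob (Eop F G i) <= c.
Proof.
move=> [d e] i; rewrite -inf_frob.
have -> : inf (Sset (@frob R n)) = M1 (@frob R n) F G by rewrite -e.
exact: M1_ge (lexx _).
Qed.

Lemma part1 F G : optimal (@frob R n) F G -> optimal (@specrad R n) F G.
Proof.
move=> o; have fle := frob_opt_le o; have d := o.1.
have le : M1 (@specrad R n) F G <= c.
  apply: M1_le; first exact: ltW.
  by move=> i; rewrite /Eop specE //; apply: le_trans (frob_tr _ _) (fle i).
split => //; rewrite (inf_c spec_tr d le).
by apply/le_anti; rewrite le; apply: LB spec_tr d.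
Qed.

Lemma part2a F G : optimal (@frob R n) F G -> optimal (@numrad R n) F G.
Proof.
move=> o; have fle := frob_opt_le o; have d := o.1.
have le : M1 (@numrad R n) F G <= c.
  apply: M1_le; first exact: ltW.
  by move=> i; rewrite /Eop; apply: le_trans (num_le _ _ n0) _; rewrite -frobE; apply: fle.
split => //; rewrite inf_num.
by apply/le_anti; rewrite le; apply: LB num_tr d.
Qed.

Lemma part2b F G : optimal (@numrad R n) F G -> optimal (@frob R n) F G.
Proof.
move=> [d e]; have nle : forall i, numrad (Eop F G i) <= c.
  by move=> i; rewrite -inf_num -e; exact: M1_ge (lexx _).
have tle : forall i, cabs (ip (F i) (G i)) <= c.
  by move=> i; rewrite ipC cabsJ; apply: le_trans (num_tr _ _) (nle i).
have teq := eq_case N0 (sumRe d.2.2) tle.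
have le : M1 (@frob R n) F G <= c.
  apply: M1_le; first exact: ltW.
  move=> i; have gf : ip (G i) (F i) = c%:C by rewrite ipC teq conjc_real.
  have := le_trans (num_ge2 gf c_gt0) (nle i).
  rewrite /Eop frobE ler_pdivrMr ?ltr0n // mulr_natr mulr2n lerD2r; exact.
split => //; rewrite inf_frob.
by apply/le_anti; rewrite le; apply: LB frob_tr d.
Qed.
End Main.
Lemma opt0 (R : realType) (N : nat) (M : 'M[R[i]]_0 -> R) (F G : 'I_N -> 'cV[R[i]]_0) :
  dual_pair F G -> optimal M F G.
Proof.
move=> d; split => //.
have key : forall F' G' : 'I_N -> 'cV[R[i]]_0, M1 M F' G' = M1 M F G.
  move=> F' G'; apply: eq_bigr => i _.
  by rewrite (flatmx0 (Eop F' G' i)) (flatmx0 (Eop F G i)).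
apply/esym; apply: inf_min; first by exists F, G.
by move=> x [F' [G' [_ ->]]]; rewrite key.
Qed.

Local Close Scope complex_scope.
Unset Implicit Arguments.

Theorem theorem6p1 (R : realType) (N n : nat) (F G : 'I_N -> 'cV[R[i]]_n) :
  (n <= N)%N -> dual_pair F G ->
  (optimal (@frob R n) F G -> optimal (@specrad R n) F G) /\
  (optimal (@frob R n) F G <-> optimal (@numrad R n) F G) /\
  (optimal (@numrad R n) F G -> optimal (@specrad R n) F G).
Proof.
case: n F G => [|n] F G nN d.
  by split; [move=> _; exact: opt0 | split; [split => _; exact: opt0 | move=> _; exact: opt0]].
have n0 : (0 < n.+1)%N by [].
have p1 := @part1 R n.+1 N n0 nN F G.
have p2a := @part2a R n.+1 N n0 nN F G.
have p2b := @part2b R n.+1 N n0 nN F G.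
split => //; split; first by split.
by move=> o; apply: p1; apply: p2b.
Qed.
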